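(* Let $w/u$ be a skew partition of length $r$, $v$ a partition with $|v|=\operatorname{card}\mathcal D(w/u)$, and $c=(c_1,c_2):\mathcal D(w/u)\to Y(v)$ a bijection with inverse $b=(b_1,b_2)$. Then $c$ satisfies the LR rules if and only if all of the following hold: (h) for $(i,j),(i',j)\in\mathcal D(w/u)$ with $i<i'$: $c_1(i,j)<c_1(i',j)$; (th) for $(i,j),(i',j)\in\mathcal D(w/u)$ with $i<i'$: $c_2(i,j)\ge c_2(i',j)$; (w) for $(i,j),(i,j')\in\mathcal D(w/u)$ with $j<j'$: $c_2(i,j)>c_2(i,j')$; (tw) for $(i,j),(i,j')\in\mathcal D(w/u)$ with $j<j'$: $c_1(i,j)\le c_1(i,j')$; (h') for $(i,j),(i',j)\in Y(v)$ with $i<i'$: $b_1(i,j)<b_1(i',j)$; (th') for $(i,j),(i',j)\in Y(v)$ with $i<i'$: $b_2(i,j)\ge b_2(i',j)$; (w') for $(i,j),(i,j')\in Y(v)$ with $j<j'$: $b_2(i,j)>b_2(i,j')$; (tw') for $(i,j),(i,j')\in Y(v)$ with $j<j'$: $b_1(i,j)\le b_1(i,j')$.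
   Context: A generalized partition of length $r$ is a weakly decreasing sequence $u=(u_1,\dots,u_r)$ of integers; its diagram is $\mathcal D(u)=\{(i,j)\in\{1,\dots,r\}\times\mathbb Z: j\le u_i\}$. If $\mathcal D(u)\subset\mathcal D(w)$, the pair forms a skew partition $w/u$ with diagram $\mathcal D(w/u)=\mathcal D(w)\setminus\mathcal D(u)$. For an ordinary partition $v$, $Y(v)=\{(i,j): i\ge1,\ 1\le j\le v_i\}$. For $(i,j)$, $i$ is the height (row index) and $j$ the width (column index). The Littlewood–Richardson order on $\mathcal D(w/u)$ is the total order with $(i,j)<_{LR}(i',j')$ if $i<i'$, and $(i,j)<_{LR}(i,j')$ if $j>j'$. For $x\in\mathcal D(w/u)$ put $C(x)=\{c(y): y\le_{LR}x\}$. A bijection $c=(c_1,c_2):\mathcal D(w/u)\to Y(v)$ satisfies the LR rules iff (L1) $c_1$ is strictly increasing (in the height) on each column of $\mathcal D(w/u)$, (L2) $c_1$ is weakly increasing (in the width) on each row of $\mathcal D(w/u)$, and (Y) for each $x\in\mathcal D(w/u)$, $C(x)$ is a Young diagram, i.e. equals $Y(\mu)$ for some partition $\mu$. *)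

(* Defs.v *)
(* Cells are pairs (height, width) of integers, 1-based rows. *)
From mathcomp Require Import all_boot all_order all_algebra.
Set Implicit Arguments. Unset Strict Implicit. Unset Printing Implicit Defensive.
Import Order.TTheory GRing.Theory Num.Theory.
Local Open Scope ring_scope.

Definition cell := (int * int)%type.

Definition gen_partition (r : nat) (u : seq int) : Prop :=
  size u = r /\ sorted (fun a b : int => b <= a) u.

Definition nat_partition (v : seq nat) : Prop :=
  sorted geq v /\ all (fun x => 0 < x)%N v.

(* D(u) = {(i,j) : 1 <= i <= r, j <= u_i}  (u_i is the entry at 0-based i-1) *)
Definition inDiag (r : nat) (u : seq int) (x : cell) : Prop :=
  1 <= x.1 <= r%:Z /\ x.2 <= u`_(`|x.1 - 1|%N).

Definition skew_partition (r : nat) (w u : seq int) : Prop :=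
  gen_partition r w /\ gen_partition r u /\
  (forall x, inDiag r u x -> inDiag r w x).

Definition inSkew (r : nat) (w u : seq int) (x : cell) : Prop :=
  inDiag r w x /\ ~ inDiag r u x.

Definition inY (v : seq nat) (x : cell) : Prop :=
  1 <= x.1 /\ 1 <= x.2 /\ x.2 <= (nth 0%N v `|x.1 - 1|%N)%:Z.

(* |v| = card D(w/u), the cardinality written as sum of the row lengths *)
Definition card_skew (r : nat) (w u : seq int) : int :=
  \sum_(i < r) (w`_i - u`_i).

Definition leLR (x y : cell) : Prop :=
  x.1 < y.1 \/ (x.1 = y.1 /\ y.2 <= x.2).

Definition Cset (r : nat) (w u : seq int) (c : cell -> cell) (x : cell)
  (p : cell) : Prop :=
  exists y, inSkew r w u y /\ leLR y x /\ c y = p.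

Definition LR_rules (r : nat) (w u : seq int) (c : cell -> cell) : Prop :=
  (* (L1) *)
  (forall i i' j, inSkew r w u (i, j) -> inSkew r w u (i', j) -> i < i' ->
     (c (i, j)).1 < (c (i', j)).1) /\
  (* (L2) *)
  (forall i j j', inSkew r w u (i, j) -> inSkew r w u (i, j') -> j < j' ->
     (c (i, j)).1 <= (c (i, j')).1) /\
  (* (Y) *)
  (forall x, inSkew r w u x ->
     exists mu : seq nat, nat_partition mu /\
       forall p, Cset r w u c x p <-> inY mu p).

(* Main.v *)
Require Import Defs.
From mathcomp Require Import all_boot all_order all_algebra.
From mathcomp Require Import zify.
From Stdlib Require ClassicalDescription.
Import Order.TTheory GRing.Theory Num.Theory.
Local Open Scope ring_scope.

Lemma sorted_ge_nth (s : seq int) (i j : nat) :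
  sorted (fun a b : int => b <= a) s -> (i <= j)%N -> (j < size s)%N ->
  s`_j <= s`_i.
Proof.
move=> Hs Hij Hj.
have tr : transitive (fun a b : int => b <= a).
  by move=> y x z /= H1 H2; exact: le_trans H2 H1.
have rf : reflexive (fun a b : int => b <= a) by move=> x /=.
apply: (sorted_leq_nth tr rf 0 Hs) => //; rewrite inE //; exact: leq_ltn_trans Hj.
Qed.

Lemma nat_nth_mono (s : seq nat) (i j : nat) :
  sorted geq s -> (i <= j)%N -> (nth 0%N s j <= nth 0%N s i)%N.
Proof.
move=> Hs Hij.
have [Hj|Hj] := ltnP j (size s); last by rewrite nth_default.
have tr : transitive geq by move=> y x z /= H1 H2; exact: leq_trans H2 H1.
have rf : reflexive geq by move=> x /=.
apply: (sorted_leq_nth tr rf 0%N Hs) => //; rewrite inE //; exact: leq_ltn_trans Hj.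
Qed.

Lemma inY_down (mu : seq nat) p q : nat_partition mu -> inY mu p ->
  1 <= q.1 <= p.1 -> 1 <= q.2 <= p.2 -> inY mu q.
Proof.
case: p => p1 p2; case: q => q1 q2 [Hs _] [/= H1 [H2 H3]] /andP[H4 H5] /andP[H6 H7].
rewrite /inY /=; split=> //; split=> //.
have := @nat_nth_mono mu `|q1 - 1| `|p1 - 1| Hs.
move=> /(_ ltac:(lia)) Hn. lia.
Qed.

Lemma leLR_trans x y z : leLR x y -> leLR y z -> leLR x z.
Proof. case: x => ? ?; case: y => ? ?; case: z => ? ? /=; rewrite /leLR /=; lia. Qed.

Lemma young_lemma (v : seq nat) (S : cell -> Prop) :
  nat_partition v ->
  (forall p, S p -> inY v p) ->
  (forall p q, S p -> 1 <= q.1 <= p.1 -> 1 <= q.2 <= p.2 -> S q) ->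
  exists mu, nat_partition mu /\ forall p, S p <-> inY mu p.
Proof.
move=> [Hvs Hvp] HSY HSd.
pose P (k j : nat) : bool :=
  if ClassicalDescription.excluded_middle_informative (S ((k.+1)%:Z, (j.+1)%:Z)) then true else false.
have PS k j : P k j <-> S ((k.+1)%:Z, (j.+1)%:Z).
  by rewrite /P; case: ClassicalDescription.excluded_middle_informative.
have Pv k j : P k j -> (j < nth 0%N v k)%N.
  move=> /PS /HSY [_ [_ /= H]].
  rewrite [X in nth _ _ X](_ : _ = k) in H; last by lia.
  lia.
have Pd k j k' j' : P k j -> (k' <= k)%N -> (j' <= j)%N -> P k' j'.
  move=> /PS H Hk Hj; apply/PS; apply: (HSd _ _ H) => /=; lia.
pose m k := seq.find (fun j => ~~ P k j) (iota 0%N (nth 0%N v k).+1).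
have m_spec k j : P k j = (j < m k)%N.
  have Hh : has (fun j => ~~ P k j) (iota 0%N (nth 0%N v k).+1).
    apply/hasP; exists (nth 0%N v k); first (rewrite mem_iota; lia).
    by apply/negP => /Pv; rewrite ltnn.
  have Hm := Hh; rewrite has_find size_iota in Hm.
  have [Hj|Hj] := ltnP j (m k).
    have := before_find 0%N Hj; rewrite nth_iota ?add0n; last exact: ltn_trans Hm.
    by move/negbFE.
  have := nth_find 0%N Hh; rewrite nth_iota // add0n.
  move=> /negP HP; apply/negP => HPj; apply: HP; exact: Pd HPj _ _.
have m_anti k k' : (k <= k')%N -> (m k' <= m k)%N.
  move=> Hk; rewrite leqNgt; apply/negP => H.
  have : P k' (m k) by rewrite m_spec.
  by move=> /(Pd _ _ k (m k)) /(_ Hk (leqnn _)); rewrite m_spec ltnn.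
pose L := seq.find (fun k => m k == 0%N) (iota 0%N (size v).+1).
have HhL : has (fun k => m k == 0%N) (iota 0%N (size v).+1).
  apply/hasP; exists (size v); first (rewrite mem_iota; lia).
  apply/eqP; apply/eqP; rewrite -leqn0 leqNgt; apply/negP; rewrite -m_spec.
  by move=> /Pv; rewrite nth_default.
have HL := HhL; rewrite has_find size_iota in HL.
have mL : m L = 0%N.
  by have := nth_find 0%N HhL; rewrite nth_iota // add0n => /eqP.
pose mu := mkseq m L.
have nth_mu k : nth 0%N mu k = m k.
  have [Hk|Hk] := ltnP k L; first by rewrite nth_mkseq.
  rewrite nth_default ?size_mkseq //.
  by apply/esym/eqP; rewrite -leqn0 -mL; apply: m_anti.
exists mu; split.
  split.
    apply: homo_sorted; last exact: iota_sorted.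
    by move=> x y /= /m_anti.
  apply/allP => x /mapP [k]; rewrite mem_iota add0n => /andP[_ Hk] ->.
  have := before_find 0%N Hk; rewrite nth_iota ?add0n; last exact: ltn_trans HL.
  by rewrite lt0n => ->.
case=> p1 p2; split.
  move=> H; have [/= H1 [H2 _]] := HSY _ H.
  have E1 : p1 = (`|p1 - 1|.+1)%:Z by lia.
  have E2 : p2 = (`|p2 - 1|.+1)%:Z by lia.
  rewrite E1 E2 in H; move/PS: H; rewrite m_spec => H.
  rewrite /inY /= nth_mu; lia.
move=> [/= H1 [H2 H3]]; rewrite nth_mu in H3.
have E1 : p1 = (`|p1 - 1|.+1)%:Z by lia.
have E2 : p2 = (`|p2 - 1|.+1)%:Z by lia.
rewrite E1 E2; apply/PS; rewrite m_spec; lia.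
Qed.
Arguments leLR_trans {x y z}.

Section Main.
Variables (r : nat) (w u : seq int) (v : seq nat) (c b : cell -> cell).
Hypothesis Hsk : skew_partition r w u.
Hypothesis Hv : nat_partition v.
Hypothesis Hc : forall x, inSkew r w u x -> inY v (c x).
Hypothesis Hb : forall y, inY v y -> inSkew r w u (b y).
Hypothesis Hbc : forall x, inSkew r w u x -> b (c x) = x.
Hypothesis Hcb : forall y, inY v y -> c (b y) = y.

Local Notation D := (inSkew r w u).
Local Notation Yv := (inY v).

Lemma D_iff a s : D (a, s) <->
  (1 <= a <= r%:Z /\ u`_`|a - 1| < s /\ s <= w`_`|a - 1|).
Proof.
rewrite /inSkew /inDiag /=; split.
  move=> [[/andP[H1 H2] H3] H4]; split; first by apply/andP.
  split=> //; rewrite ltNge; apply/negP => H5; apply: H4; split=> //; exact/andP.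
move=> [/andP[H1 H2] [H3 H4]]; split; first by split=> //; apply/andP.
by move=> [_ H5]; lia.
Qed.

Lemma mono_u a a' : 1 <= a -> a <= a' -> a' <= r%:Z ->
  u`_`|a' - 1| <= u`_`|a - 1| /\ w`_`|a' - 1| <= w`_`|a - 1|.
Proof.
move: Hsk => [[Hw1 Hw2] [[Hu1 Hu2] _]] H1 H2 H3.
split; apply: sorted_ge_nth => //; lia.
Qed.

Lemma Dbox a1 s1 a2 s2 a s : D (a1, s1) -> D (a2, s2) ->
  a1 <= a <= a2 -> s1 <= s <= s2 -> D (a, s).
Proof.
move=> /D_iff [/andP[H1 H2] [H3 H4]] /D_iff [/andP[H5 H6] [H7 H8]]
  /andP[H9 H10] /andP[H11 H12].
have [M1 _] := mono_u a1 a H1 H9 ltac:(lia).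
have [_ M2] := mono_u a a2 ltac:(lia) H10 H6.
apply/D_iff; split; first (apply/andP; lia).
lia.
Qed.
Arguments Dbox {a1 s1 a2 s2 a s}.


Lemma Yv_pos p : Yv p -> 1 <= p.1 /\ 1 <= p.2.
Proof. by case: p => p1 p2 [H1 [H2 _]]. Qed.

Lemma Yv_down p q : Yv p -> 1 <= q.1 <= p.1 -> 1 <= q.2 <= p.2 -> Yv q.
Proof. move: Hv => Hv'; exact: inY_down. Qed.

Definition Mprop := forall p q, Yv p -> Yv q -> q.1 <= p.1 -> q.2 <= p.2 ->
  leLR (b q) (b p).

Lemma c_inj x y : D x -> D y -> c x = c y -> x = y.
Proof. by move=> Hx Hy E; rewrite -(Hbc _ Hx) -(Hbc _ Hy) E. Qed.

Lemma Mc (M : Mprop) x y : D x -> D y -> (c x).1 <= (c y).1 -> (c x).2 <= (c y).2 ->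
  leLR x y.
Proof.
move=> Hx Hy H1 H2; have := M (c y) (c x) (Hc _ Hy) (Hc _ Hx) H1 H2.
by rewrite !Hbc.
Qed.
Arguments Mc M {x y}.



Definition L1p := forall i i' j, D (i, j) -> D (i', j) -> i < i' ->
  (c (i, j)).1 < (c (i', j)).1.
Definition L2p := forall i j j', D (i, j) -> D (i, j') -> j < j' ->
  (c (i, j)).1 <= (c (i, j')).1.

Lemma L2w (L2 : L2p) a s t : D (a, s) -> D (a, t) -> s <= t ->
  (c (a, s)).1 <= (c (a, t)).1.
Proof.
move=> Ds Dt; rewrite le_eqVlt => /orP[/eqP -> //|Hlt]; exact: L2.
Qed.
Arguments L2w L2 {a s t}.


Lemma w_c (M : Mprop) (L2 : L2p) a s t : D (a, s) -> D (a, t) -> s < t ->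
  (c (a, t)).2 < (c (a, s)).2.
Proof.
move=> Ds Dt Hst.
have L := L2 _ _ _ Ds Dt Hst.
rewrite ltNge; apply/negP => Hle.
have [P1 _] := Yv_pos _ (Hc _ Ds).
have [_ P2] := Yv_pos _ (Hc _ Dt).
have Hq : Yv ((c (a, s)).1, (c (a, t)).2).
  apply: (Yv_down (c (a, t))); first exact: Hc.
    by rewrite /= P1 L.
  by rewrite /= P2 lexx.
have H1 := M (c (a, t)) _ (Hc _ Dt) Hq L (lexx _).
have H2 := M _ (c (a, s)) Hq (Hc _ Ds) (lexx _) Hle.
rewrite !Hbc // in H1 H2.
have := leLR_trans H2 H1; rewrite /leLR /=; lia.
Qed.
Arguments w_c M L2 {a s t}.


Lemma h'_b (M : Mprop) (L2 : L2p) i i' j : Yv (i, j) -> Yv (i', j) -> i < i' ->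
  (b (i, j)).1 < (b (i', j)).1.
Proof.
move=> Hp Hp' Hii.
have HM := M (i', j) (i, j) Hp' Hp (ltW Hii) (lexx _).
have E1 := Hcb _ Hp; have E2 := Hcb _ Hp'.
have D1 := Hb _ Hp; have D2 := Hb _ Hp'.
move: HM E1 E2 D1 D2; case: (b (i, j)) => a s; case: (b (i', j)) => a' t.
rewrite /leLR /= => HM E1 E2 D1 D2.
case: HM => [//|[Ea Hts]]; subst a'.
have [Hlt|Heq] : t < s \/ t = s by lia.
  have := L2 _ _ _ D2 D1 Hlt; rewrite E1 E2 /=; lia.
subst t; rewrite E1 in E2; case: E2 => Ei; lia.
Qed.
Arguments h'_b M L2 {i i' j}.


Lemma tw'_b (M : Mprop) i j j' : Yv (i, j) -> Yv (i, j') -> j < j' ->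
  (b (i, j)).1 <= (b (i, j')).1.
Proof.
move=> Hp Hp' Hjj.
have HM := M (i, j') (i, j) Hp' Hp (lexx _) (ltW Hjj).
move: HM; case: (b (i, j)) => a s; case: (b (i, j')) => a' t.
rewrite /leLR /=; lia.
Qed.

Lemma w'_b (M : Mprop) (L1 : L1p) (L2 : L2p) i j j' :
  Yv (i, j) -> Yv (i, j') -> j < j' -> (b (i, j')).2 < (b (i, j)).2.
Proof.
move=> Hp Hp' Hjj.
have HM := M (i, j') (i, j) Hp' Hp (lexx _) (ltW Hjj).
have E1 := Hcb _ Hp; have E2 := Hcb _ Hp'.
have D1 := Hb _ Hp; have D2 := Hb _ Hp'.
move: HM E1 E2 D1 D2; case: (b (i, j)) => a s; case: (b (i, j')) => a' t.
rewrite /leLR /= => HM E1 E2 D1 D2.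
rewrite ltNge; apply/negP => Hst.
case: HM => [Haa|[Ea Hts]].
  have Das : D (a', s) by apply: (Dbox D1 D2); lia.
  have H1 := L1 _ _ _ D1 Das Haa.
  have H2 := L2w L2 Das D2 Hst.
  rewrite E1 /= in H1; rewrite E2 /= in H2; lia.
have Est : t = s by lia.
subst a' t; rewrite E1 in E2; case: E2 => Ej; lia.
Qed.

Lemma TH_adj (M : Mprop) (L1 : L1p) (L2 : L2p) a a' s : a' = a + 1 ->
  D (a, s) -> D (a', s) -> (c (a', s)).2 <= (c (a, s)).2.
Proof.
move=> Ea.
suff H : forall n : nat, forall s, s <= u`_`|a - 1| + n%:Z -> D (a, s) -> D (a', s) ->
    (c (a', s)).2 <= (c (a, s)).2.
  move=> Ds Ds'; apply: (H (absz (s - u`_`|a - 1|)%R)) => //.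
  move/D_iff: Ds => [_ [H1 _]]; lia.
elim=> [|n IH] s0 Hn D0 D0'.
  move/D_iff: D0 => [_ [H _]]; lia.
rewrite leNgt; apply/negP => Hlt.
have Hii := L1 _ _ _ D0 D0' ltac:(lia).
have Y1 := Hc _ D0; have Y2 := Hc _ D0'.
have B1 := Hbc _ D0; have B2 := Hbc _ D0'.
move: Hlt Hii Y1 Y2 B1 B2.
case E: (c (a, s0)) => [i j]; case E': (c (a', s0)) => [i' j'] /= Hlt Hii Y1 Y2 B1 B2.
have [/= P1 P2] := Yv_pos _ Y1.
have Hq : Yv (i, j + 1) by apply: (Yv_down (i', j')) => //=; lia.
have Dy := Hb _ Hq; have Ey := Hcb _ Hq.
have HM1 := M (i, j + 1) (i, j) Hq Y1 (lexx _) ltac:(simpl; lia).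
have HM2 := M (i', j') (i, j + 1) Y2 Hq ltac:(simpl; lia) ltac:(simpl; lia).
rewrite B1 in HM1; rewrite B2 in HM2.
move: HM1 HM2 Dy Ey; case: (b (i, j + 1)) => e f.
rewrite /leLR /= => HM1 HM2 Dy Ey.
have Nx : ~ (e = a /\ f = s0).
  by move=> [? ?]; subst e f; rewrite E in Ey; case: Ey => ?; lia.
have Nx' : ~ (e = a' /\ f = s0).
  by move=> [? ?]; subst e f; rewrite E' in Ey; case: Ey => ? ?; lia.
have [[Ee Hf]|[Ee Hf]] : (e = a /\ f < s0) \/ (e = a' /\ s0 < f) by lia.
  subst e.
  have Da1 : D (a, s0 - 1) by apply: (Dbox Dy D0); lia.
  have Da1' : D (a', s0 - 1) by apply: (Dbox Dy D0'); lia.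
  have IH1 := IH (s0 - 1) ltac:(lia) Da1 Da1'.
  have La := L2w L2 Dy Da1 ltac:(lia).
  have Lb := L2 _ _ _ Da1 D0 ltac:(lia).
  have Lc := L2 _ _ _ Da1' D0' ltac:(lia).
  have Wc := w_c M L2 Da1 D0 ltac:(lia).
  move: IH1 La Lb Lc Wc.
  case E1: (c (a, s0 - 1)) => [k l]; case E1': (c (a', s0 - 1)) => [k' l'].
  rewrite Ey E E' /= => IH1 La Lb Lc Wc.
  have Hl : l <= j + 1.
    rewrite leNgt; apply/negP => Hl.
    have := Mc M Dy Da1; rewrite Ey E1 /= => /(_ ltac:(lia) ltac:(lia)).
    rewrite /leLR /= => HH.
    have Ef : f = s0 - 1 by lia.
    subst f; rewrite E1 in Ey; case: Ey => ? ?; lia.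
  have Hl' : j' < l'.
    rewrite ltNge; apply/negP => Hl'.
    have := Mc M Da1' D0'; rewrite E1' E' /= => /(_ ltac:(lia) ltac:(lia)).
    rewrite /leLR /=; lia.
  lia.
subst e.
have Daf : D (a, f) by apply: (Dbox D0 Dy); lia.
have La := L2w L2 D0 Daf ltac:(lia).
have Lb := L1 _ _ _ Daf Dy ltac:(lia).
rewrite E in La; rewrite Ey in Lb; simpl in La, Lb; lia.
Qed.

Lemma TH (M : Mprop) (L1 : L1p) (L2 : L2p) a a' s : a < a' ->
  D (a, s) -> D (a', s) -> (c (a', s)).2 <= (c (a, s)).2.
Proof.
suff H : forall n : nat, forall a', a' = a + (n.+1)%:Z -> D (a, s) -> D (a', s) ->
    (c (a', s)).2 <= (c (a, s)).2.
  move=> Ha Ds Ds'; apply: (H (absz (a' - a - 1)%R)) => //; lia.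
elim=> [|n IH] a0 Ea0 Ds Ds'.
  apply: (TH_adj M L1 L2 a a0 s) => //; lia.
have Dm : D (a0 - 1, s) by apply: (Dbox Ds Ds'); lia.
have H1 := IH (a0 - 1) ltac:(lia) Ds Dm.
have H2 := TH_adj M L1 L2 (a0 - 1) a0 s ltac:(lia) Dm Ds'.
exact: le_trans H2 H1.
Qed.
Arguments TH M L1 L2 {a a' s}.


Lemma TH'_b (M : Mprop) (L1 : L1p) (L2 : L2p) i i' j :
  Yv (i, j) -> Yv (i', j) -> i < i' -> (b (i', j)).2 <= (b (i, j)).2.
Proof.
move=> Hp Hp' Hii.
have Ha := h'_b M L2 Hp Hp' Hii.
have E1 := Hcb _ Hp; have E2 := Hcb _ Hp'.
have D1 := Hb _ Hp; have D2 := Hb _ Hp'.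
move: Ha E1 E2 D1 D2; case: (b (i, j)) => a s; case: (b (i', j)) => a' t.
move=> /= Ha E1 E2 D1 D2.
rewrite leNgt; apply/negP => Hst.
have Dz : D (a, t) by apply: (Dbox D1 D2); lia.
have W := w_c M L2 D1 Dz Hst.
have T := TH M L1 L2 Ha Dz D2.
rewrite E1 in W; rewrite E2 in T; simpl in W, T; lia.
Qed.

Lemma M_from
  (H1 : forall i i' j, Yv (i, j) -> Yv (i', j) -> i < i' -> (b (i, j)).1 < (b (i', j)).1)
  (H2 : forall i j j', Yv (i, j) -> Yv (i, j') -> j < j' -> (b (i, j)).2 > (b (i, j')).2)
  (H3 : forall i j j', Yv (i, j) -> Yv (i, j') -> j < j' -> (b (i, j)).1 <= (b (i, j')).1) :
  Mprop.
Proof.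
case=> p1 p2; case=> q1 q2 Hp Hq /= Hle1 Hle2.
have [/= Pp1 Pp2] := Yv_pos _ Hp.
have [/= Pq1 Pq2] := Yv_pos _ Hq.
have Hm : Yv (q1, p2) by apply: (Yv_down _ _ Hp) => /=; lia.
apply: (@leLR_trans _ (b (q1, p2))).
  have [Hlt|Heq] : q2 < p2 \/ q2 = p2 by lia.
    have := H3 _ _ _ Hq Hm Hlt; have := H2 _ _ _ Hq Hm Hlt.
    case: (b (q1, q2)) => ? ?; case: (b (q1, p2)) => ? ?; rewrite /leLR /=; lia.
  subst; rewrite /leLR; lia.
have [Hlt|Heq] : q1 < p1 \/ q1 = p1 by lia.
  have := H1 _ _ _ Hm Hp Hlt.
  case: (b (q1, p2)) => ? ?; case: (b (p1, p2)) => ? ?; rewrite /leLR /=; lia.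
subst; rewrite /leLR; lia.
Qed.

Lemma Y_to_M (HY : forall x, D x -> exists mu, nat_partition mu /\
    forall p, Cset r w u c x p <-> inY mu p) : Mprop.
Proof.
move=> p q Hp Hq H1 H2.
have Dy := Hb _ Hp.
have [mu [Hmu Heq]] := HY _ Dy.
have Cp : Cset r w u c (b p) p.
  exists (b p); split=> //; split; last exact: Hcb.
  by rewrite /leLR; right; split.
have /Heq Yp := Cp.
have [Pq1 Pq2] := Yv_pos _ Hq.
have Yq : inY mu q by apply: (@inY_down mu p q Hmu Yp); apply/andP; split.
have /Heq [z [Dz [Hz Ez]]] := Yq.
by rewrite -Ez Hbc.
Qed.

Lemma M_to_Y (M : Mprop) x : D x -> exists mu, nat_partition mu /\
    forall p, Cset r w u c x p <-> inY mu p.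
Proof.
move=> Dx; apply: (@young_lemma v (Cset r w u c x) Hv).
  by move=> p [y [Dy [_ <-]]]; exact: Hc.
move=> p q [y [Dy [Hyx Ey]]] Hq1 Hq2.
have Yp : Yv p by rewrite -Ey; exact: Hc.
have Yq := Yv_down p q Yp Hq1 Hq2.
exists (b q); split; first exact: Hb.
split; last exact: Hcb.
apply: (@leLR_trans _ y) Hyx.
move: Hq1 Hq2 => /andP[_ Hq1] /andP[_ Hq2].
by have := M p q Yp Yq Hq1 Hq2; rewrite -Ey Hbc.
Qed.

End Main.

Theorem proposition4p11 (r : nat) (w u : seq int) (v : seq nat)
  (c b : cell -> cell) :
  skew_partition r w u ->
  nat_partition v ->
  (sumn v)%:Z = card_skew r w u ->
  (* c : D(w/u) -> Y(v) is a bijection with inverse b *)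
  (forall x, inSkew r w u x -> inY v (c x)) ->
  (forall y, inY v y -> inSkew r w u (b y)) ->
  (forall x, inSkew r w u x -> b (c x) = x) ->
  (forall y, inY v y -> c (b y) = y) ->
  LR_rules r w u c <->
  ( (* (h) *)
      (forall i i' j, inSkew r w u (i, j) -> inSkew r w u (i', j) -> i < i' ->
         (c (i, j)).1 < (c (i', j)).1) /\
      (* (th) *)
      (forall i i' j, inSkew r w u (i, j) -> inSkew r w u (i', j) -> i < i' ->
         (c (i, j)).2 >= (c (i', j)).2) /\
      (* (w) *)
      (forall i j j', inSkew r w u (i, j) -> inSkew r w u (i, j') -> j < j' ->
         (c (i, j)).2 > (c (i, j')).2) /\
      (* (tw) *)
      (forall i j j', inSkew r w u (i, j) -> inSkew r w u (i, j') -> j < j' ->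
         (c (i, j)).1 <= (c (i, j')).1) /\
      (* (h') *)
      (forall i i' j, inY v (i, j) -> inY v (i', j) -> i < i' ->
         (b (i, j)).1 < (b (i', j)).1) /\
      (* (th') *)
      (forall i i' j, inY v (i, j) -> inY v (i', j) -> i < i' ->
         (b (i, j)).2 >= (b (i', j)).2) /\
      (* (w') *)
      (forall i j j', inY v (i, j) -> inY v (i, j') -> j < j' ->
         (b (i, j)).2 > (b (i, j')).2) /\
      (* (tw') *)
      (forall i j j', inY v (i, j) -> inY v (i, j') -> j < j' ->
         (b (i, j)).1 <= (b (i, j')).1)).
Proof.
move=> Hsk Hv _ Hc Hb Hbc Hcb; split.
  move=> [L1 [L2 HY]].
  have M : Mprop v b by apply: Y_to_M; eassumption.
  split; first exact: L1.
  split; first by move=> i i' j H1 H2 H3; apply: TH; eassumption.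
  split; first by move=> i j j' H1 H2 H3; apply: w_c; eassumption.
  split; first exact: L2.
  split; first by move=> i i' j H1 H2 H3; apply: h'_b; eassumption.
  split; first by move=> i i' j H1 H2 H3; apply: TH'_b; eassumption.
  split; first by move=> i j j' H1 H2 H3; apply: w'_b; eassumption.
  by move=> i j j' H1 H2 H3; apply: tw'_b; eassumption.
move=> [h [_ [_ [tw [h' [_ [w' tw']]]]]]].
split; first exact: h.
split; first exact: tw.
have M : Mprop v b by apply: M_from; eassumption.
by move=> x Hx; apply: M_to_Y; eassumption.
Qed.
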